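(* For every function $f_1:\mathbb{N}\times\mathbb{N}\to\mathbb{N}$ there exists a function $f_2:\mathbb{N}\times\mathbb{N}\to\mathbb{N}$ with $f_2\ge f_1$ such that the following holds. Let $G=(V,E)$ be a graph of pathwidth $\mathrm{pw}$ and maximum degree $\Delta$, let $F\subseteq V$ be a set of initially burned vertices with $|F|\le f_1(\mathrm{pw},\Delta)$, and let the budget be any $b\ge1$. Then there exists a protection strategy for the firefighter process on $G$ started from the burned set $F$ such that at most $f_2(\mathrm{pw},\Delta)$ vertices are burned at the end of the process.
   Context: Firefighter process with initial burned set $F$: at step $t=0$ all vertices of $F$ are burned. At every step $t>0$: (1) protection phase: at most $b$ vertices not yet burned become protected; (2) spreading phase: every unprotected vertex adjacent to a burned vertex becomes burned. Burned and protected vertices stay so; the process stops when no new vertex can become burned. A protection strategy specifies which vertices to protect at each step. Pathwidth and maximum degree are the standard notions. *)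

(* Defs.v *)
From mathcomp Require Import all_boot.
Set Implicit Arguments. Unset Strict Implicit. Unset Printing Implicit Defensive.

Section Graphs.
Variable T : finType.
Variable e : rel T.

Definition simple_graph : Prop := symmetric e /\ irreflexive e.

Definition max_degree : nat := \max_(v : T) #|[set u | e v u]|.

Definition bag (bags : seq {set T}) (i : nat) : {set T} := nth set0 bags i.

Definition is_path_decomposition (bags : seq {set T}) : Prop :=
  [/\ (forall v : T, has (fun B : {set T} => v \in B) bags),
      (forall u v : T, e u v -> has (fun B : {set T} => (u \in B) && (v \in B)) bags)
    & (forall (v : T) (i j k : nat), i <= j -> j <= k ->
          v \in bag bags i -> v \in bag bags k -> v \in bag bags j)].

Definition pd_width (bags : seq {set T}) : nat := (\max_(B <- bags) #|B|).-1.

Definition is_pathwidth (pw : nat) : Prop :=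
  (exists bags, is_path_decomposition bags /\ pd_width bags = pw) /\
  (forall bags, is_path_decomposition bags -> pw <= pd_width bags).

(* Firefighter process. A strategy S gives the set S t protected at step t>0
   (S 0 is ignored).  ff_state F S t = (burned set, protected set) after step t. *)
Fixpoint ff_state (F : {set T}) (S : nat -> {set T}) (t : nat) : {set T} * {set T} :=
  match t with
  | 0 => (F, set0)
  | t'.+1 =>
      let (B, P) := ff_state F S t' in
      let P' := P :|: S t in
      (B :|: [set v | (v \notin P') && [exists u in B, e u v]], P')
  end.

Definition burned (F : {set T}) (S : nat -> {set T}) (t : nat) : {set T} :=
  (ff_state F S t).1.

Definition valid_strategy (F : {set T}) (b : nat) (S : nat -> {set T}) : Prop :=
  forall t : nat, #|S t.+1| <= b /\ [disjoint S t.+1 & burned F S t].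

End Graphs.

(* Main.v *)
Require Import Defs.
From mathcomp Require Import all_boot.
From mathcomp Require Import zify.
Set Implicit Arguments. Unset Strict Implicit. Unset Printing Implicit Defensive.

Lemma card_bigcup_le (I T : finType) (A : {pred I}) (f : I -> {set T}) :
  #|\bigcup_(i in A) f i| <= \sum_(i in A) #|f i|.
Proof.
elim/big_rec2: _ => [|i n U _ IH]; first by rewrite cards0.
by rewrite (leq_trans (leq_card_setU _ _)) // leq_add2l.
Qed.

Section Fire.
Variable T : finType.
Implicit Types (e : rel T) (F : {set T}) (S : nat -> {set T}).

Definition prot S t : {set T} := \bigcup_(j < t) S j.+1.

Lemma ff_prot e F S t : (ff_state e F S t).2 = prot S t.
Proof.
elim: t => [|t IH] /=; first by rewrite /prot big_ord0.
case E: (ff_state e F S t) IH => [B P] /= ->.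
by rewrite /prot big_ord_recr.
Qed.

Lemma burnedS e F S t : burned e F S t.+1 =
  burned e F S t :|: [set v | (v \notin prot S t.+1) && [exists u in burned e F S t, e u v]].
Proof.
rewrite /burned /=. have := ff_prot e F S t.
case: (ff_state e F S t) => B P /= ->.
by rewrite /prot big_ord_recr.
Qed.

Lemma burned0 e F S : burned e F S 0 = F.
Proof. by []. Qed.

Lemma burnedSP e F S t v : reflect (v \in burned e F S t \/
   (v \notin prot S t.+1 /\ exists2 u, u \in burned e F S t & e u v))
   (v \in burned e F S t.+1).
Proof.
rewrite burnedS inE in_set.
apply: (iffP orP) => [[->|/andP[h /exists_inP[u hu huv]]]|[->|[h [u hu huv]]]].
- by left.
- by right; split=> //; exists u.
- by left.
- by right; rewrite h; apply/exists_inP; exists u.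
Qed.

Lemma burned_mono e F S t1 t2 : t1 <= t2 -> burned e F S t1 \subset burned e F S t2.
Proof.
move=> le; rewrite -(subnKC le); elim: (t2 - t1) => [|d IH]; first by rewrite addn0.
by rewrite addnS (subset_trans IH) // burnedS subsetUl.
Qed.

Lemma prot_mono S t1 t2 : t1 <= t2 -> prot S t1 \subset prot S t2.
Proof.
move=> le; rewrite -(subnKC le); elim: (t2 - t1) => [|d IH]; first by rewrite addn0.
by rewrite addnS (subset_trans IH) // /prot big_ord_recr subsetUl.
Qed.

Lemma prot_empty t : prot (fun _ => set0) t = set0.
Proof. by rewrite /prot big1. Qed.

Definition ball e F t := burned e F (fun _ => set0) t.

Lemma burned_ball e F S t : burned e F S t \subset ball e F t.
Proof.
elim: t => [|t IH]; first by [].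
apply/subsetP => v /burnedSP [h|[_ [u hu huv]]]; apply/burnedSP.
  by left; apply: (subsetP IH).
by right; split; [rewrite prot_empty inE | exists u => //; apply: (subsetP IH)].
Qed.

Lemma ball_card e F D : (forall v, #|[set u | e v u]| <= D) ->
  forall t, #|ball e F t| <= #|F| * D.+1 ^ t.
Proof.
move=> hD; elim => [|t IH]; first by rewrite expn0 muln1.
have sub : ball e F t.+1 \subset ball e F t :|: \bigcup_(u in ball e F t) [set v | e u v].
  apply/subsetP => v /burnedSP [h|[_ [u hu huv]]]; rewrite inE; first by rewrite h.
  by apply/orP; right; apply/bigcupP; exists u => //; rewrite inE.
apply: (leq_trans (subset_leq_card sub)).
apply: (leq_trans (leq_card_setU _ _)).
apply: (@leq_trans (#|ball e F t| + #|ball e F t| * D)).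
  rewrite leq_add2l; apply: (leq_trans (card_bigcup_le _ _)).
  rewrite -sum_nat_const; apply: leq_sum => u _; exact: hD.
rewrite -mulnS; apply: (leq_trans (leq_mul IH (leqnn D.+1))).
by rewrite expnS [D.+1 * _]mulnC mulnA.
Qed.

Lemma never_burned e F S v t0 : v \notin burned e F S t0 -> v \in prot S t0 ->
  forall t, t0 <= t -> v \notin burned e F S t.
Proof.
move=> nb pr t le; rewrite -(subnKC le); elim: (t - t0) => [|d IH]; first by rewrite addn0.
rewrite addnS; apply/negP => /burnedSP [h|[h _]]; first by rewrite h in IH.
by move: h; rewrite (subsetP (prot_mono S (leqW (leq_addr d t0))) v pr).
Qed.

End Fire.

Definition cross (T : finType) (e : rel T) (pos : T -> nat) (g : nat) : {set T * T} :=
  [set uv | e uv.1 uv.2 && (pos uv.1 <= g < pos uv.2)].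

Fixpoint Nb (c D k : nat) : nat :=
  match c with
  | 0 => k
  | c'.+1 => k * D.+1 ^ (4 * k * c) + Nb c' D (k * D.+1 ^ (4 * k * c) * D)
  end.

Lemma main_base (T : finType) (pos : T -> nat) (D : nat) (e : rel T) (k : nat) (F : {set T}) :
  symmetric e -> irreflexive e -> injective pos ->
  (forall g, #|cross e pos g| <= 0) -> #|F| <= k ->
  exists S, valid_strategy e F 1 S /\ forall t, #|burned e F S t| <= Nb 0 D k.
Proof.
move=> esym eirr pinj hc hF.
have noe : forall u v, ~~ e u v.
  move=> u v; apply/negP => huv.
  have neq : u != v by apply/eqP => E; rewrite E eirr in huv.
  have : pos u != pos v by rewrite (inj_eq pinj).
  rewrite neq_ltn => /orP [lt|lt].
    have : (u, v) \in cross e pos (pos u) by rewrite inE /= huv leqnn lt.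
    by move: (hc (pos u)); rewrite leqn0 cards_eq0 => /eqP ->; rewrite inE.
  have : (v, u) \in cross e pos (pos v) by rewrite inE /= esym huv leqnn lt.
  by move: (hc (pos v)); rewrite leqn0 cards_eq0 => /eqP ->; rewrite inE.
exists (fun _ => set0); split.
  by move=> t; rewrite cards0; split=> //; rewrite disjoint_subset; apply/subsetP => x; rewrite inE.
have E : forall t, burned e F (fun _ => set0) t = F.
  elim=> [|t IH] //; apply/setP => v; apply/burnedSP/idP => [[|[_ [u _ huv]]]|h].
  - by rewrite IH.
  - by rewrite (negbTE (noe u v)) in huv.
  - by left; rewrite IH.
by move=> t; rewrite E.
Qed.

Section Step.
Variables (T : finType) (pos : T -> nat) (D c : nat).
Hypothesis IHc : forall (e : rel T) (k : nat) (F : {set T}),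
  symmetric e -> irreflexive e -> injective pos -> (forall v, 0 < pos v) ->
  (forall v, #|[set u | e v u]| <= D) -> (forall g, #|cross e pos g| <= c) -> #|F| <= k ->
  exists S, valid_strategy e F 1 S /\ forall t, #|burned e F S t| <= Nb c D k.

Lemma main_step (e : rel T) (k : nat) (F : {set T}) :
  symmetric e -> irreflexive e -> injective pos -> (forall v, 0 < pos v) ->
  (forall v, #|[set u | e v u]| <= D) -> (forall g, #|cross e pos g| <= c.+1) -> #|F| <= k ->
  exists S, valid_strategy e F 1 S /\ forall t, #|burned e F S t| <= Nb c.+1 D k.
Proof.
move=> esym eirr pinj ppos hD hc hF.
pose Tm := 4 * k * c.+1.
pose Bl := ball e F Tm.
pose good g := [forall uv in cross e pos g, (uv.1 \notin Bl) && (uv.2 \notin Bl)].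
pose M := \max_(v : T) pos v.
have goodM : forall g, M <= g -> good g.
  move=> g hg; apply/forall_inP => uv; rewrite inE => /andP[_ /andP[_ h]].
  have h2 : pos uv.2 <= M := leq_bigmax uv.2.
  by have := leq_ltn_trans h2 (leq_ltn_trans hg h); rewrite ltnn.
have good0 : good 0.
  apply/forall_inP => uv; rewrite inE => /andP[_ /andP[h _]].
  by have := ppos uv.1; rewrite ltnNge h.
have ex_rb : forall f, exists g, (pos f <= g) && good g.
  by move=> f; exists (pos f + M); rewrite leq_addr goodM // leq_addl.
have ex_lb : forall f, exists g, (g < pos f) && good g.
  by move=> f; exists 0; rewrite ppos good0.
have lb_bound : forall f g, (g < pos f) && good g -> g <= pos f.
  by move=> f g /andP[h _]; apply: ltnW.
pose rb f := ex_minn (ex_rb f).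
pose lb f := ex_maxn (ex_lb f) (lb_bound f).
have rbP : forall f, [/\ pos f <= rb f, good (rb f) & forall g, pos f <= g < rb f -> ~~ good g].
  move=> f; rewrite /rb; case: ex_minnP => m /andP[h1 h2] hmin; split=> // g /andP[g1 g2].
  apply/negP => gg; have := hmin g; rewrite g1 gg => /(_ isT) hle.
  by rewrite leqNgt g2 in hle.
have lbP : forall f, [/\ lb f < pos f, good (lb f) & forall g, lb f < g < pos f -> ~~ good g].
  move=> f; rewrite /lb; case: ex_maxnP => m /andP[h1 h2] hmax; split=> // g /andP[g1 g2].
  apply/negP => gg; have := hmax g; rewrite g2 gg => /(_ isT) hle.
  by rewrite leqNgt g1 in hle.
pose I f x := (lb f < pos x) && (pos x <= rb f).
pose X := [set x | [exists f in F, I f x]].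
pose ends (Z : {set T * T}) := [set uv.1 | uv in Z] :|: [set uv.2 | uv in Z].
pose C0 := \bigcup_(f in F) (ends (cross e pos (lb f)) :|: ends (cross e pos (rb f))).
have endscard : forall g, #|ends (cross e pos g)| <= 2 * c.+1.
  move=> g; apply: (leq_trans (leq_card_setU _ _)).
  rewrite mul2n -addnn; apply: leq_add; exact: (leq_trans (leq_imset_card _ _) (hc g)).
have C0card : #|C0| <= Tm.
  apply: (leq_trans (card_bigcup_le _ _)).
  apply: (@leq_trans (\sum_(f in F) (4 * c.+1))).
    apply: leq_sum => f _; apply: (leq_trans (leq_card_setU _ _)).
    by rewrite (_ : 4 = 2 + 2) // mulnDl; apply: leq_add.
  by rewrite sum_nat_const /Tm [4 * k]mulnC -mulnA leq_mul.
have endsgood : forall g x, good g -> x \in ends (cross e pos g) -> x \notin Bl.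
  move=> g x /forall_inP gg; rewrite inE => /orP [] /imsetP [uv huv ->];
  by case/andP: (gg uv huv).
have C0good : forall x, x \in C0 -> x \notin Bl.
  move=> x /bigcupP [f _]; rewrite inE => /orP [].
    by apply: endsgood; case: (lbP f).
  by apply: endsgood; case: (rbP f).
have key : forall f u v, f \in F -> e u v -> I f u -> ~~ I f v -> (u \in C0) && (v \in C0).
  move=> f u v fF huv /andP[hu1 hu2]; rewrite negb_and -!ltnNge => /orP [hv|hv].
    have hx : (v, u) \in cross e pos (lb f) by rewrite inE /= esym huv hu1 andbT.
    apply/andP; split; apply/bigcupP; exists f => //; rewrite !inE; apply/orP; left;
      apply/orP; [right | left]; apply/imsetP; exists (v, u) => //.
  have hx : (u, v) \in cross e pos (rb f) by rewrite inE /= huv hu2 hv.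
  apply/andP; split; apply/bigcupP; exists f => //; rewrite !inE; apply/orP; right;
    apply/orP; [left | right]; apply/imsetP; exists (u, v) => //.

pose A := [set x in X | (x \notin Bl) && (x \notin C0)].
pose e' := [rel u v | [&& e u v, u \in A & v \in A]].
pose F' := [set v in A | [exists u in Bl, e u v]].
pose Bb := k * D.+1 ^ Tm.
have Blcard : #|Bl| <= Bb.
  by apply: (leq_trans (@ball_card T e F D hD Tm)); rewrite leq_mul2r hF orbT.
have F'card : #|F'| <= Bb * D.
  have sub : F' \subset \bigcup_(u in Bl) [set v | e u v].
    apply/subsetP => v; rewrite inE => /andP[_ /exists_inP [u hu huv]].
    by apply/bigcupP; exists u => //; rewrite inE.
  apply: (leq_trans (subset_leq_card sub)); apply: (leq_trans (card_bigcup_le _ _)).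
  apply: (@leq_trans (\sum_(u in Bl) D)); first by apply: leq_sum => u _; apply: hD.
  by rewrite sum_nat_const leq_mul2r Blcard orbT.
have e'sym : symmetric e'.
  by move=> u v /=; rewrite esym; case: (u \in A); case: (v \in A); rewrite ?andbF ?andbT.
have e'irr : irreflexive e'.
  by move=> u /=; rewrite eirr.
have hD' : forall v, #|[set u | e' v u]| <= D.
  move=> v; apply: (leq_trans _ (hD v)); apply: subset_leq_card; apply/subsetP => u.
  by rewrite !inE /= => /andP[].
have hc' : forall g, #|cross e' pos g| <= c.
  move=> g; case: (set_0Vmem (cross e' pos g)) => [->|[uv huv]]; first by rewrite cards0.
  move: (huv); rewrite inE /= => /andP[/and3P[he uA vA] /andP[hug hgv]].
  have ng : ~~ good g.
    move: (uA); rewrite inE => /andP[]; rewrite inE => /exists_inP [f fF hfu] _.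
    have hfv : I f uv.2.
      apply/negPn/negP => hn; have := key f _ _ fF he hfu hn.
      by move: uA; rewrite inE => /and3P[_ _ /negbTE ->].
    move: hfu hfv => /andP[h1 _] /andP[_ h2].
    case: (ltnP g (pos f)) => hgf.
      by case: (lbP f) => _ _; apply; rewrite hgf (leq_trans h1 hug).
    by case: (rbP f) => _ _; apply; rewrite hgf (leq_trans hgv h2).
  case/forall_inPn: ng => uv0 h0 h1.
  have sub : cross e' pos g \subset cross e pos g :\ uv0.
    apply/subsetP => w; rewrite !inE /= => /andP[/and3P[hw w1 w2] hw2].
    rewrite hw hw2 !andbT; apply/eqP => E; subst w.
    move: h1; rewrite negb_and !negbK => /orP [] hb.
      by move: w1; rewrite inE hb /= andbF.
    by move: w2; rewrite inE hb /= andbF.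
  apply: (leq_trans (subset_leq_card sub)).
  by have := hc g; rewrite (cardsD1 uv0) h0 add1n ltnS.
have [S' [S'val S'bd]] := IHc e'sym e'irr pinj ppos hD' hc' F'card.
pose S t := if t <= Tm.+1 then [set x in C0 | index x (enum C0) == t.-1]
            else S' (t - Tm.+1) :&: A.
exists S.

have Bsub : forall t, t <= Tm -> burned e F S t \subset Bl.
  move=> t ht; apply: (subset_trans (burned_ball e F S t)).
  exact: (burned_mono e F (fun _ => set0) ht).
have Bc : forall x t, x \in C0 -> x \notin burned e F S t.
  move=> x t xC.
  have xnB : x \notin burned e F S Tm.
    by apply/negP => /(subsetP (Bsub Tm (leqnn _))); rewrite (negbTE (C0good x xC)).
  have xP : x \in prot S Tm.
    have hi : index x (enum C0) < Tm.
      by apply: (leq_trans _ C0card); rewrite cardE index_mem mem_enum.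
    apply/bigcupP; exists (Ordinal hi) => //.
    by rewrite /S /= ltnS (ltnW hi) inE xC /= eqxx.
  case: (leqP t Tm) => ht.
    by apply/negP => /(subsetP (burned_mono e F S ht)); rewrite (negbTE xnB).
  exact: (never_burned xnB xP (ltnW ht)).
have BX : forall t, burned e F S t \subset X.
  elim=> [|t IH].
    apply/subsetP => f fF; rewrite inE; apply/exists_inP; exists f => //.
    by rewrite /I; case: (lbP f) => -> _ _; case: (rbP f) => -> _ _.
  apply/subsetP => v /burnedSP [h|[_ [u hu huv]]]; first exact: (subsetP IH).
  move: (subsetP IH u hu); rewrite inE => /exists_inP [f fF hfu].
  rewrite inE; apply/exists_inP; exists f => //; apply/negPn/negP => hn.
  by case/andP: (key f u v fF huv hfu hn) => /(Bc u t); rewrite hu.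
have BA : forall t v, v \in burned e F S t -> v \notin Bl -> v \in A.
  move=> t v hv hb; rewrite inE (subsetP (BX t) v hv) hb /=.
  by apply/negP => vC; rewrite (negbTE (Bc v t vC)) in hv.
have BD : forall s, burned e F S (Tm.+1 + s) \subset Bl :|: burned e' F' S' s.
  elim=> [|s IH].
    rewrite addn0; apply/subsetP => v hv; case/burnedSP: (hv) => [h|[_ [u hu huv]]].
      by rewrite inE (subsetP (Bsub Tm (leqnn _)) v h).
    case vBl: (v \in Bl); first by rewrite inE vBl.
    rewrite inE; apply/orP; right; rewrite burned0 inE (BA _ _ hv (negbT vBl)) /=.
    by apply/exists_inP; exists u => //; apply: (subsetP (Bsub Tm (leqnn _))).
  rewrite addnS; apply/subsetP => v hv; case/burnedSP: (hv) => [h|[hp [u hu huv]]].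
    move: (subsetP IH v h); rewrite !inE => /orP [->//|h2]; apply/orP; right.
    exact: (subsetP (burned_mono e' F' S' (leqnSn s)) v h2).
  case vBl: (v \in Bl); first by rewrite inE vBl.
  have vA := BA _ _ hv (negbT vBl).
  rewrite inE; apply/orP; right.
  case uBl: (u \in Bl).
    apply: (subsetP (burned_mono e' F' S' (leq0n s.+1))); rewrite burned0 inE vA /=.
    by apply/exists_inP; exists u.
  have uA := BA _ _ hu (negbT uBl).
  move: (subsetP IH u hu); rewrite inE uBl /= => hu'.
  apply/burnedSP; right; split; last by exists u => //=; rewrite huv uA vA.
  apply/negP => /bigcupP [j _ hj]; move/negP: hp; apply.
  have hj' : Tm.+1 + j < (Tm.+1 + s).+1 by rewrite ltnS leq_add2l -ltnS.
  apply/bigcupP; exists (Ordinal hj') => //=.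
  rewrite /S /=.
  have -> : ((Tm.+1 + j).+1 <= Tm.+1) = false by lia.
  have -> : (Tm.+1 + j).+1 - Tm.+1 = j.+1 by lia.
  by rewrite inE hj vA.
split.
  move=> t; case: (leqP t.+1 Tm.+1) => h.
    rewrite /S h /=; split.
      apply/card_le1_eqP => x y; rewrite !inE => /andP[xC /eqP xi] /andP[yC /eqP yi].
      rewrite -(nth_index x (_ : x \in enum C0)) ?mem_enum //.
      by rewrite -(nth_index x (_ : y \in enum C0)) ?mem_enum // xi yi.
    rewrite disjoint_subset; apply/subsetP => x; rewrite !inE => /andP[xC _].
    exact: Bc.
  rewrite /S (_ : (t.+1 <= Tm.+1) = false); last by rewrite leqNgt h.
  have -> : t.+1 - Tm.+1 = (t - Tm.+1).+1 by lia.
  have ht : t = Tm.+1 + (t - Tm.+1) by lia.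
  case: (S'val (t - Tm.+1)) => hcard hdis; split.
    exact: (leq_trans (subset_leq_card (subsetIl _ _)) hcard).
  rewrite disjoint_subset; apply/subsetP => x; rewrite !inE => /andP[xS xA].
  apply/negP; rewrite {1}ht => /(subsetP (BD _)); rewrite inE => /orP [xB|xB'].
    by move: xA; rewrite xB /= andbF.
  by move: hdis; rewrite disjoint_subset => /subsetP /(_ x xS); rewrite !inE xB'.
move=> t; rewrite /Nb -/Nb -/Tm -/Bb.
case: (leqP t Tm) => ht.
  by apply: (leq_trans (subset_leq_card (Bsub t ht))); apply: (leq_trans Blcard); rewrite leq_addr.
have -> : t = Tm.+1 + (t - Tm.+1) by lia.
apply: (leq_trans (subset_leq_card (BD _))); apply: (leq_trans (leq_card_setU _ _)).
by apply: leq_add.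
Qed.
End Step.

Lemma main (T : finType) (pos : T -> nat) (D c : nat) : forall (e : rel T) (k : nat) (F : {set T}),
  symmetric e -> irreflexive e -> injective pos -> (forall v, 0 < pos v) ->
  (forall v, #|[set u | e v u]| <= D) -> (forall g, #|cross e pos g| <= c) -> #|F| <= k ->
  exists S, valid_strategy e F 1 S /\ forall t, #|burned e F S t| <= Nb c D k.
Proof.
elim: c => [|c IHc] e k F esym eirr pinj ppos hD hc hF.
  exact: (main_base D esym eirr pinj hc hF).
exact: (main_step IHc).
Qed.

Lemma pw_order (T : finType) (e : rel T) (pw D : nat) : is_pathwidth e pw ->
  (forall v, #|[set u | e v u]| <= D) ->
  exists pos : T -> nat, [/\ injective pos, forall v, 0 < pos v &
     forall g, #|cross e pos g| <= pw.+1 * D].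
Proof.
case=> [[bags [[hcov hedge hint] hw]] _] hD.
pose first v := find (fun B : {set T} => v \in B) bags.
pose n := #|T|.
pose r (v : T) := nat_of_ord (enum_rank v).
have rlt : forall v, r v < n by move=> v; exact: ltn_ord.
pose pos v := (first v * n + r v).+1.
have firstP : forall v, v \in bag bags (first v) by move=> v; exact: (nth_find set0 (hcov v)).
have first_le : forall v i, v \in bag bags i -> first v <= i.
  move=> v i hv; rewrite leqNgt; apply/negP => lt.
  by have := before_find set0 lt; rewrite /bag in hv; rewrite hv.
have pos_lt : forall x y, pos x < pos y -> first x <= first y.
  move=> x y hxy; rewrite leqNgt; apply/negP => lt.
  have h1 : (first y).+1 * n <= first x * n by rewrite leq_mul2r lt orbT.
  have := rlt y; have := rlt x; move: hxy; rewrite /pos mulSn in h1 *; lia.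
have pinj : injective pos.
  move=> x y [E]; apply: enum_rank_inj; apply: val_inj => /=.
  have := congr1 (modn^~ n) E; rewrite !modnMDl !modn_small //; exact: rlt.
have pos_le : forall x y, pos x <= pos y -> first x <= first y.
  move=> x y; rewrite leq_eqVlt => /orP [/eqP /pinj ->|]; [exact: leqnn | exact: pos_lt].
exists pos; split => // g.
case: (set_0Vmem (cross e pos g)) => [->|[uv0 huv0]]; first by rewrite cards0.
have g0 : g < pos uv0.2 by move: huv0; rewrite inE => /andP[_ /andP[]].
case: (@arg_minnP _ uv0.2 (fun x => g < pos x) pos g0) => w gw wmin.
pose j := first w.
have sub : cross e pos g \subset \bigcup_(u in bag bags j) [set (u, v) | v in [set v | e u v]].
  apply/subsetP => [[u v]]; rewrite inE /= => /andP[huv /andP[hug hgv]].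
  apply/bigcupP; exists u; last by apply/imsetP; exists v => //; rewrite inE.
  have fuw : first u <= j by apply: pos_lt; apply: (leq_ltn_trans hug gw).
  have fwv : j <= first v by apply: pos_le; apply: wmin.
  case/(has_nthP set0): (hedge u v huv) => i _ /andP[ui vi].
  apply: (hint u (first u) j i fuw _ (firstP u) ui).
  by apply: (leq_trans fwv); apply: first_le.
apply: (leq_trans (subset_leq_card sub)); apply: (leq_trans (card_bigcup_le _ _)).
apply: (@leq_trans (\sum_(u in bag bags j) D)).
  apply: leq_sum => u _; apply: (leq_trans (leq_imset_card _ _)); exact: hD.
rewrite sum_nat_const leq_mul2r; apply/orP; right.
case: (ltnP j (size bags)) => hj.
  have := @leq_bigmax_seq _ bags predT (fun B : {set T} => #|B|) (bag bags j) (mem_nth set0 hj) isT.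
  move=> h; apply: (leq_trans h); rewrite /pd_width in hw.
  by rewrite -hw; exact: leqSpred.
by rewrite /bag nth_default // cards0.
Qed.

Theorem theorem2 :
  forall f1 : nat -> nat -> nat,
  exists f2 : nat -> nat -> nat,
    (forall p d : nat, f1 p d <= f2 p d) /\
    forall (T : finType) (e : rel T), simple_graph e ->
    forall pw Delta : nat, is_pathwidth e pw -> max_degree e = Delta ->
    forall F : {set T}, #|F| <= f1 pw Delta ->
    forall b : nat, 1 <= b ->
    exists S : nat -> {set T},
      valid_strategy e F b S /\
      forall t : nat, #|burned e F S t| <= f2 pw Delta.
Proof.
move=> f1; exists (fun p d => maxn (f1 p d) (Nb (p.+1 * d) d (f1 p d))); split.
  by move=> p d; rewrite leq_maxl.
move=> T e [esym eirr] pw Delta hpw hdeg F hF b hb.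
have hD : forall v, #|[set u | e v u]| <= Delta.
  by move=> v; rewrite -hdeg /max_degree; exact: (leq_bigmax (F := fun v => #|[set u | e v u]|) v).
have [pos [pinj ppos hc]] := pw_order hpw hD.
have [S [Sval Sbd]] := main esym eirr pinj ppos hD hc hF.
exists S; split.
  by move=> t; case: (Sval t) => h1 h2; split=> //; exact: (leq_trans h1 hb).
by move=> t; apply: (leq_trans (Sbd t)); rewrite leq_maxr.
Qed.
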